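(* Let $p\ge2$ and consider the dynamic panel logit AR($p$) model with $T=3$: $(Y^{(0)},X,A)$ has an arbitrary joint distribution with $Y^{(0)}=(Y_{1-p},\dots,Y_0)\in\{0,1\}^p$, $X=(X_1,X_2,X_3)\in\mathbb{R}^{K\times3}$, $A\in\mathbb{R}$, and conditionally on $(Y^{(0)},X,A)$ the outcomes $Y=(Y_1,Y_2,Y_3)$ satisfy, for $t\in\{1,2,3\}$, $$\Pr(Y_t=1\mid Y_{1-p},\dots,Y_{t-1},X,A)=\frac{\exp(X_t'\beta_0+\sum_{\ell=1}^pY_{t-\ell}\gamma_{0,\ell}+A)}{1+\exp(X_t'\beta_0+\sum_{\ell=1}^pY_{t-\ell}\gamma_{0,\ell}+A)},$$ with true parameters $\beta_0\in\mathbb{R}^K$, $\gamma_0=(\gamma_{0,1},\dots,\gamma_{0,p})\in\mathbb{R}^p$. Let $0_r,1_r$ be $r$-vectors of zeros and ones, $x_{ts}=x_t-x_s$, and for $y=(y_1,y_2,y_3)$ define $$m_{(0_p)}=\begin{cases}e^{x_{12}'\beta}&y=(0,1,0),\\ e^{x_{12}'\beta-\gamma_1}&y=(0,1,1),\\ -1&(y_1,y_2)=(1,0),\\0&\text{otherwise},\end{cases}\qquad m_{(0,1_{p-1})}=\begin{cases}-1&(y_1,y_2)=(0,1),\\ e^{x_{21}'\beta-\gamma_1+\gamma_p}&y=(1,0,0),\\ e^{x_{21}'\beta+\gamma_p}&y=(1,0,1),\\0&\text{otherwise},\end{cases}$$ $$m_{(1,0_{p-1})}=\begin{cases}e^{x_{12}'\beta+\gamma_p}&y=(0,1,0),\\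 e^{x_{12}'\beta-\gamma_1+\gamma_p}&y=(0,1,1),\\ -1&(y_1,y_2)=(1,0),\\0&\text{otherwise},\end{cases}\qquad m_{(1_p)}=\begin{cases}-1&(y_1,y_2)=(0,1),\\ e^{x_{21}'\beta-\gamma_1}&y=(1,0,0),\\ e^{x_{21}'\beta}&y=(1,0,1),\\0&\text{otherwise},\end{cases}$$ as functions of $(y,x,\beta,\gamma)$. For $k\in\{1,\dots,K\}$ let $\mathcal{X}_{k,+}=\{x\in\mathbb{R}^{K\times3}:x_{k,1}<x_{k,2}\}$, $\mathcal{X}_{k,-}=\{x\in\mathbb{R}^{K\times3}:x_{k,1}>x_{k,2}\}$ (with $x_{k,t}$ the $k$-th component of $x_t$), and for $s\in\{-,+\}^K$ let $\mathcal{X}_s=\bigcap_{k=1}^K\mathcal{X}_{k,s_k}$. (i) Let $y^{(0)}\in\{0_p,1_p\}$. Assume that for all $\epsilon>0$ and $s\in\{-,+\}^K$, $\Pr(Y^{(0)}=y^{(0)},X\in\mathcal{X}_s,\|X_2-X_3\|\le\epsilon)>0$, and that the expectations below are well-defined. Then $\mathbb{E}[m_{y^{(0)}}(Y,X,\beta,\gamma)\mid Y^{(0)}=y^{(0)},X\in\mathcal{X}_s,X_2=X_3]=0$ for all $s\in\{-,+\}^K$ if and only if $\beta=\beta_0$ and $\gamma_1=\gamma_{0,1}$. (ii) Let $y^{(0)}\in\{(0,1_{p-1}),(1,0_{p-1})\}$. Assume that for all $\epsilon>0$, $\Pr(Y^{(0)}=y^{(0)},\|X_2-X_3\|\le\epsilon)>0$,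 and that the expectation below is well-defined. Then $\mathbb{E}[m_{y^{(0)}}(Y,X,\beta_0,(\gamma_{0,1},\gamma_2,\dots,\gamma_p))\mid Y^{(0)}=y^{(0)},X_2=X_3]=0$ if and only if $\gamma_p=\gamma_{0,p}$.
   Context: Expectations are taken under the true data distribution (generated with $\beta_0,\gamma_0$), while moment functions are evaluated at candidate parameter values. The conditioning on $X_2=X_3$ is conditioning on the event that the second and third regressor vectors coincide. *)

(* Defs.v *)
From HB Require Import structures.
From mathcomp Require Import all_boot all_order all_algebra.
From mathcomp Require Import all_classical all_reals all_analysis.
Set Implicit Arguments. Unset Strict Implicit. Unset Printing Implicit Defensive.
Import Order.TTheory GRing.Theory Num.Theory.
Import numFieldNormedType.Exports.
Local Open Scope classical_set_scope.
Local Open Scope ring_scope.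

Section Model.
Variables (R : realType) (p K : nat).

(* Space of (X, A): X is a K x 3 matrix whose column t-1 is X_t; A real.
   Borel sigma-algebra (generated by the open sets of the product topology). *)
Definition XA := g_sigma_algebraType (@open ('M[R]_(K, 3) * R)%type).

Definition t1 : 'I_3 := @Ordinal 3 0 isT.
Definition t2 : 'I_3 := @Ordinal 3 1 isT.
Definition t3 : 'I_3 := @Ordinal 3 2 isT.

(* 1-based coordinate l of gamma in R^p : gamma_l *)
Definition gam (g : 'I_p -> R) (l : nat) : R := nth 0 [seq g i | i <- enum 'I_p] l.-1.

Definition xb (x : 'M[R]_(K, 3)) (b : 'I_K -> R) (t : nat) : R :=
  \sum_(k < K) x k (inord t.-1) * b k.

(* Outcome history (Y_{1-p}, ..., Y_0, Y_1, Y_2, Y_3);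
   y0 i is Y_{1-p+i}, y = (Y_1, Y_2, Y_3). Y_u sits at position u + p - 1. *)
Definition hist (y0 : {ffun 'I_p -> bool}) (y : bool * bool * bool) : seq bool :=
  [seq y0 i | i <- enum 'I_p] ++ [:: y.1.1; y.1.2; y.2].

(* Y_{t - l} for t in {1,2,3}, l in {1..p} *)
Definition Ylag y0 y (t l : nat) : bool := nth false (hist y0 y) (t + p.-1 - l).

Definition logistic (u : R) : R := expR u / (1 + expR u).

Definition lindex y0 y (x : 'M[R]_(K, 3)) (a : R) (b : 'I_K -> R) (g : 'I_p -> R)
    (t : nat) : R :=
  xb x b t + \sum_(1 <= l < p.+1) (Ylag y0 y t l)%:R * gam g l + a.

Definition Yt (y : bool * bool * bool) (t : nat) : bool :=
  nth false [:: y.1.1; y.1.2; y.2] t.-1.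

Definition prob y0 (x : 'M[R]_(K, 3)) (a : R) (b : 'I_K -> R) (g : 'I_p -> R)
    (y : bool * bool * bool) : R :=
  \prod_(1 <= t < 4)
    (if Yt y t then logistic (lindex y0 y x a b g t)
     else 1 - logistic (lindex y0 y x a b g t)).

Definition y0_0p : {ffun 'I_p -> bool} := [ffun _ => false].
Definition y0_1p : {ffun 'I_p -> bool} := [ffun _ => true].
Definition y0_01 : {ffun 'I_p -> bool} := [ffun i => val i != 0%N].
Definition y0_10 : {ffun 'I_p -> bool} := [ffun i => val i == 0%N].

Definition x12b x b := xb x b 1 - xb x b 2.
Definition x21b x b := xb x b 2 - xb x b 1.

Definition m_0p (y : bool * bool * bool) x b g : R :=
  match y with
  | (false, true, false) => expR (x12b x b)
  | (false, true, true) => expR (x12b x b - gam g 1)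
  | (true, false, _) => -1
  | _ => 0
  end.
Definition m_01 (y : bool * bool * bool) x b g : R :=
  match y with
  | (false, true, _) => -1
  | (true, false, false) => expR (x21b x b - gam g 1 + gam g p)
  | (true, false, true) => expR (x21b x b + gam g p)
  | _ => 0
  end.
Definition m_10 (y : bool * bool * bool) x b g : R :=
  match y with
  | (false, true, false) => expR (x12b x b + gam g p)
  | (false, true, true) => expR (x12b x b - gam g 1 + gam g p)
  | (true, false, _) => -1
  | _ => 0
  end.
Definition m_1p (y : bool * bool * bool) x b g : R :=
  match y with
  | (false, true, _) => -1
  | (true, false, false) => expR (x21b x b - gam g 1)
  | (true, false, true) => expR (x21b x b)
  | _ => 0
  end.

Definition mom (y0 : {ffun 'I_p -> bool}) :=
  if y0 == y0_0p then m_0p else if y0 == y0_1p then m_1p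
  else if y0 == y0_01 then m_01 else if y0 == y0_10 then m_10
  else fun _ _ _ _ => 0.

(* E[m_{y0}(Y, X, b, g) | Y^(0) = y0, X = x, A = a] under the true (b0, g0) *)
Definition cmom b0 g0 y0 (b : 'I_K -> R) (g : 'I_p -> R) (z : XA) : R :=
  \sum_(y : bool * bool * bool) prob y0 z.1 z.2 b0 g0 y * mom y0 y z.1 b g.

(* the sets X_s (s k = true means sign +) and the events on X *)
Definition Xs (s : {ffun 'I_K -> bool}) : set XA :=
  [set z : XA | forall k : 'I_K, if s k then z.1 k t1 < z.1 k t2 else z.1 k t1 > z.1 k t2].
Definition Xnear (e : R) : set XA := [set z : XA | `|col t2 z.1 - col t3 z.1| <= e].
Definition Xslice : set XA := [set z : XA | col t2 z.1 = col t3 z.1].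

(* nu is the conditional law of (X, A) given the positive-probability event
   S (under the sub-law mu0 = law of (X,A) on {Y^(0) = y0}) and X_2 = X_3:
   it is the weak limit, as e -> 0+, of the laws conditioned on
   S /\ ||X_2 - X_3|| <= e, and it is carried by S /\ X_2 = X_3. *)
Definition cond_law_slice (mu0 : {measure set XA -> \bar R}) (S : set XA)
    (nu : probability XA R) : Prop :=
  nu (S `&` Xslice) = 1%E /\
  forall f : ('M[R]_(K, 3) * R)%type -> R,
    continuous f -> (exists M : R, forall z, `|f z| <= M) ->
    (fun e : R => fine (\int[mu0]_(z in S `&` Xnear e) (f z)%:E)
                  / fine (mu0 (S `&` Xnear e)))
      @ 0^'+ --> fine (\int[nu]_z (f (z : XA))%:E).

(* E[m_{y0}(Y,X,b,g) | Y^(0) = y0, (X,A) ~ nu], by iterated expectations *)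
Definition CE b0 g0 y0 (nu : probability XA R) b g : \bar R :=
  \int[nu]_z (cmom b0 g0 y0 b g z)%:E.

End Model.

(* Main.v *)
Require Import Defs.
From HB Require Import structures.
From mathcomp Require Import all_boot all_order all_algebra.
From mathcomp Require Import all_classical all_reals all_analysis.
From mathcomp Require Import zify ring lra.
Import Order.TTheory GRing.Theory Num.Theory.
Import numFieldNormedType.Exports.
Local Open Scope classical_set_scope.
Local Open Scope ring_scope.



Section Meas.
Variables (R : realType) (K : nat).

Lemma entry_cont (i : 'I_K) (j : 'I_3) :
  continuous (fun z : ('M[R]_(K, 3) * R)%type => z.1 i j).
Proof.
move=> z; apply: (@continuous_comp _ _ _ fst (fun M : 'M[R]_(K,3) => M i j)).
  exact: cvg_fst.
exact: coord_continuous.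
Qed.

Lemma open_meas (A : set (XA R K)) : open (A : set ('M[R]_(K, 3) * R)%type) -> measurable A.
Proof. move=> oA; exact: sub_sigma_algebra. Qed.

Lemma meas_lt (i : 'I_K) (j j' : 'I_3) :
  measurable ([set z : XA R K | z.1 i j < z.1 i j'] ).
Proof.
apply: open_meas.
have -> : [set z : ('M[R]_(K, 3) * R)%type | z.1 i j < z.1 i j'] =
  (fun z : ('M[R]_(K, 3) * R)%type => z.1 i j' - z.1 i j) @^-1` [set x | 0 < x].
  by apply/seteqP; split => z /=; rewrite subr_gt0.
apply: open_comp; last exact: open_gt.
move=> z _; apply: continuousB; exact: entry_cont.
Qed.

Lemma meas_eq (i : 'I_K) (j j' : 'I_3) :
  measurable ([set z : XA R K | z.1 i j = z.1 i j'] ).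
Proof.
rewrite -[X in measurable X]setCK; apply: measurableC; apply: open_meas.
have -> : ~` [set z : ('M[R]_(K, 3) * R)%type | z.1 i j = z.1 i j'] =
  (fun z : ('M[R]_(K, 3) * R)%type => z.1 i j' - z.1 i j) @^-1` (~` [set 0]).
  apply/seteqP; split => z /= H E; apply: H.
    by apply/esym/eqP; rewrite -subr_eq0 E.
  by rewrite E subrr.
apply: open_comp; last first.
  rewrite openC; exact: closed_eq.
move=> z _; apply: continuousB; exact: entry_cont.
Qed.

Lemma meas_XsS s : measurable (Xs s `&` @Xslice R K).
Proof.
have -> : Xs s `&` @Xslice R K = \bigcap_(k in [set: 'I_K])
   ([set z : XA R K | if s k then z.1 k t1 < z.1 k t2 else z.1 k t2 < z.1 k t1] `&`
    [set z : XA R K | z.1 k t2 = z.1 k t3]).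
  apply/seteqP; split => z /=.
    move=> [H1 H2] k _; split; first exact: H1.
    by move: H2 => /matrixP /(_ k ord0); rewrite !mxE.
  move=> H; split; first by move=> k; case: (H k I).
  by apply/matrixP => k i; rewrite !mxE; case: (H k I).
apply: fin_bigcap_measurable; first exact: finite_finset.
move=> k _; apply: measurableI; last exact: meas_eq.
case: (s k); exact: meas_lt.
Qed.

End Meas.

Lemma meas_slice (R : realType) (K : nat) : measurable (@Xslice R K).
Proof.
have -> : @Xslice R K = \bigcap_(k in [set: 'I_K]) [set z : XA R K | z.1 k t2 = z.1 k t3].
  apply/seteqP; split => z /=.
    by move=> H2 k _; move: H2 => /matrixP /(_ k ord0); rewrite !mxE.
  by move=> H; apply/matrixP => k i; rewrite !mxE; apply: H.
apply: fin_bigcap_measurable; first exact: finite_finset.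
by move=> k _; exact: meas_eq.
Qed.


Section Int.
Variables (R : realType) (K : nat).
Variable nu : probability (XA R K) R.

Lemma int_restrict {S : set (XA R K)} {f : XA R K -> R} :
  measurable S -> nu S = 1%E -> nu.-integrable setT (fun z => (f z)%:E) ->
  (\int[nu]_z (f z)%:E = \int[nu]_(z in S) (f z)%:E)%E.
Proof.
move=> mS nS fi.
rewrite (negligible_integral (N := ~` S)) //.
all: try (by rewrite setTD setCK).
all: try (exact: measurableC).
have := probability_setC nu mS. by rewrite nS subee.
Qed.

Lemma int_zero {S : set (XA R K)} {f : XA R K -> R} :
  measurable S -> nu S = 1%E -> nu.-integrable setT (fun z => (f z)%:E) ->
  (forall z, S z -> f z = 0) -> (\int[nu]_z (f z)%:E = 0)%E.
Proof.
move=> mS nS fi f0; rewrite (int_restrict mS nS fi).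
by apply: integral0_eq => z Sz; rewrite f0.
Qed.

Lemma int_pos {S : set (XA R K)} {f : XA R K -> R} :
  measurable S -> nu S = 1%E -> nu.-integrable setT (fun z => (f z)%:E) ->
  (forall z, S z -> 0 < f z) -> (0 < \int[nu]_z (f z)%:E)%E.
Proof.
move=> mS nS fi f0; rewrite (int_restrict mS nS fi).
have ge0 : (0 <= \int[nu]_(z in S) (f z)%:E)%E.
  by apply: integral_ge0 => z Sz; rewrite lee_fin ltW // f0.
rewrite lt0e ge0 andbT; apply/negP => /eqP H.
have mf := measurable_funS measurableT (@subsetT _ S) (measurable_int _ fi).
have : (\int[nu]_(z in S) `|(f z)%:E| = 0)%E.
  rewrite -H; apply: eq_integral => z /[!inE] Sz.
  by rewrite gee0_abs // lee_fin ltW // f0.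
move/(ae_eq_integral_abs _ mS mf) => [N [mN N0 sub]].
have SN : S `<=` N.
  move=> z Sz; apply: sub => /= /(_ Sz) [] E.
  by move: (f0 z Sz); rewrite E ltxx.
have : (nu S <= nu N)%E by apply: le_measure => //; rewrite inE.
by rewrite nS N0 lee_fin ler10.
Qed.

Lemma int_neg {S : set (XA R K)} {f : XA R K -> R} :
  measurable S -> nu S = 1%E -> nu.-integrable setT (fun z => (f z)%:E) ->
  (forall z, S z -> f z < 0) -> (\int[nu]_z (f z)%:E < 0)%E.
Proof.
move=> mS nS fi f0.
have fi' : nu.-integrable setT (fun z => (- f z)%:E).
  exact: (integrableN fi).
have f0' : forall z, S z -> 0 < - f z by move=> z Sz; rewrite oppr_gt0 f0.
have := int_pos mS nS fi' f0'.
rewrite (eq_integral (fun z => (- (f z)%:E)%E)) //.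
rewrite integralN; first by rewrite oppe_gt0.
by apply: fin_num_adde_defl; rewrite fin_numN; exact: integrable_neg_fin_num.
Qed.

End Int.


Section Comp.
Variables (R : realType) (p K : nat).
Hypothesis hp : (2 <= p)%N.

Definition vv (y0 : {ffun 'I_p -> bool}) j := nth false [seq y0 i | i <- enum 'I_p] j.

Lemma vv_in (y0 : {ffun 'I_p -> bool}) j (hj : (j < p)%N) : vv y0 j = y0 (Ordinal hj).
Proof.
rewrite /vv (nth_map (Ordinal hj)) ?size_enum_ord //; congr (y0 _); apply: val_inj.
by rewrite /= nth_enum_ord.
Qed.

Lemma vv_out (y0 : {ffun 'I_p -> bool}) j : (p <= j)%N -> vv y0 j = false.
Proof. by move=> hj; rewrite /vv nth_default // size_map size_enum_ord. Qed.

Lemma nth_hist_lo (y0 : {ffun 'I_p -> bool}) y j : (j < p)%N ->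
  nth false (hist y0 y) j = vv y0 j.
Proof. by move=> hj; rewrite /hist nth_cat size_map size_enum_ord hj. Qed.

Lemma nth_hist_hi (y0 : {ffun 'I_p -> bool}) y i :
  nth false (hist y0 y) (p + i) = nth false [:: y.1.1; y.1.2; y.2] i.
Proof.
by rewrite /hist nth_cat size_map size_enum_ord ltnNge leq_addr /= addKn.
Qed.

Lemma Ylag_lo (y0 : {ffun 'I_p -> bool}) y t l : (0 < t)%N -> (t <= l)%N -> (l <= p)%N ->
  Ylag y0 y t l = vv y0 (t + p.-1 - l).
Proof. by move=> *; rewrite /Ylag nth_hist_lo //; lia. Qed.

Lemma sum_lag1 (y0 : {ffun 'I_p -> bool}) y (g : 'I_p -> R) :
  \sum_(1 <= l < p.+1) (Ylag y0 y 1 l)%:R * gam g l =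
  \sum_(1 <= l < p.+1) (vv y0 (p - l))%:R * gam g l.
Proof.
apply: eq_big_nat => l /andP[l1 lp]; rewrite Ylag_lo; try lia.
by have -> : (1 + p.-1 - l = p - l)%N by lia.
Qed.

Lemma sum_lag2 (y0 : {ffun 'I_p -> bool}) y (g : 'I_p -> R) :
  \sum_(1 <= l < p.+1) (Ylag y0 y 2 l)%:R * gam g l =
  (y.1.1)%:R * gam g 1 + \sum_(2 <= l < p.+1) (vv y0 (p.+1 - l))%:R * gam g l.
Proof.
rewrite big_ltn; last by lia.
congr (_ * _ + _).
  by rewrite /Ylag (_ : (2 + p.-1 - 1 = p + 0)%N) ?nth_hist_hi //; lia.
apply: eq_big_nat => l /andP[l1 lp]; rewrite Ylag_lo; try lia.
by have -> : (2 + p.-1 - l = p.+1 - l)%N by lia.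
Qed.

Lemma sum_lag3 (y0 : {ffun 'I_p -> bool}) y (g : 'I_p -> R) :
  \sum_(1 <= l < p.+1) (Ylag y0 y 3 l)%:R * gam g l =
  (y.1.2)%:R * gam g 1 + (y.1.1)%:R * gam g 2 +
  \sum_(3 <= l < p.+1) (vv y0 (p.+2 - l))%:R * gam g l.
Proof.
rewrite big_ltn; last by lia.
rewrite big_ltn; last by lia.
rewrite addrA; congr (_ * _ + _ * _ + _).
- by rewrite /Ylag (_ : (3 + p.-1 - 1 = p + 1)%N) ?nth_hist_hi //; lia.
- by rewrite /Ylag (_ : (3 + p.-1 - 2 = p + 0)%N) ?nth_hist_hi //; lia.
apply: eq_big_nat => l /andP[l1 lp]; rewrite Ylag_lo; try lia.
by have -> : (3 + p.-1 - l = p.+2 - l)%N by lia.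
Qed.


Lemma sum_bool3 (F : bool * bool * bool -> R) :
  \sum_(y : bool * bool * bool) F y =
  F (true, true, true) + F (true, true, false) + (F (true, false, true) + F (true, false, false)) +
  (F (false, true, true) + F (false, true, false) + (F (false, false, true) + F (false, false, false))).
Proof.
have E : \sum_(y : bool * bool * bool) F y = \sum_(a : bool * bool) \sum_(b : bool) F (a, b).
  by rewrite pair_big; apply: eq_bigr => -[].
rewrite E; have E2 : forall G : bool * bool -> R, \sum_(a : bool * bool) G a = \sum_(a : bool) \sum_(b : bool) G (a, b).
  by move=> G; rewrite pair_big; apply: eq_bigr => -[].
by rewrite E2 !big_bool.
Qed.

Lemma prob3 y0 x a b g y : @prob R p K y0 x a b g y =
  (if Yt y 1 then logistic (lindex y0 y x a b g 1) else 1 - logistic (lindex y0 y x a b g 1)) *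
  (if Yt y 2 then logistic (lindex y0 y x a b g 2) else 1 - logistic (lindex y0 y x a b g 2)) *
  (if Yt y 3 then logistic (lindex y0 y x a b g 3) else 1 - logistic (lindex y0 y x a b g 3)).
Proof.
rewrite /prob.
rewrite big_ltn; last by [].
rewrite big_ltn; last by [].
rewrite big_ltn; last by [].
rewrite big_geq; last by [].
by rewrite mulr1 !mulrA.
Qed.

Lemma vv_0p j : vv (y0_0p p) j = false.
Proof. by case: (ltnP j p) => h; [rewrite (vv_in _ _ h) ffunE | rewrite vv_out]. Qed.

Lemma lindex_0p y (x : 'M[R]_(K,3)) (a : R) (b : 'I_K -> R) (g : 'I_p -> R) :
  [/\ lindex (y0_0p p) y x a b g 1 = xb x b 1 + a,
      lindex (y0_0p p) y x a b g 2 = xb x b 2 + (y.1.1)%:R * gam g 1 + a &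
      lindex (y0_0p p) y x a b g 3 = xb x b 3 + ((y.1.2)%:R * gam g 1 + (y.1.1)%:R * gam g 2) + a].
Proof.
rewrite /lindex sum_lag1 sum_lag2 sum_lag3.
rewrite !big1 ?addr0 //; move=> l _; by rewrite vv_0p mul0r.
Qed.

Lemma logisticE (u : R) : logistic u = expR u / (1 + expR u).
Proof. by []. Qed.

Lemma onemlogistic (u : R) : 1 - logistic u = 1 / (1 + expR u).
Proof.
rewrite /logistic; have h : 1 + expR u != 0 by rewrite lt0r_neq0 // addr_gt0 // expR_gt0.
by field.
Qed.

Lemma y0_neq1 : y0_1p p != y0_0p p.
Proof.
apply/negP => /eqP /ffunP /(_ (Ordinal (ltnW hp))); by rewrite !ffunE.
Qed.


Ltac pos := repeat first [ exact: expR_gt0 | exact: ltr01 | apply: addr_gt0 | apply: mulr_gt0 | apply: divr_gt0 ].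
Ltac side := repeat (apply/andP; split); apply: lt0r_neq0; pos.

Lemma cmom_0p b0 g0 b g (z : XA R K) : xb z.1 b0 3 = xb z.1 b0 2 ->
  cmom b0 g0 (y0_0p p) b g z =
  expR (xb z.1 b0 1 + z.2) / ((1 + expR (xb z.1 b0 1 + z.2)) * (1 + expR (xb z.1 b0 2 + z.2 + gam g0 1)) * (1 + expR (xb z.1 b0 2 + z.2))) *
  (expR (x12b z.1 b - x12b z.1 b0) * (1 + expR (xb z.1 b0 2 + z.2) * expR (gam g0 1 - gam g 1))
   - (1 + expR (xb z.1 b0 2 + z.2))).
Proof.
move=> h23.
rewrite /cmom /mom eqxx sum_bool3.
rewrite /m_0p !mulr0 !addr0 !add0r !prob3 /Yt /=.
have [-> -> ->] := lindex_0p (true, false, true) z.1 z.2 b0 g0.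
have [-> -> ->] := lindex_0p (true, false, false) z.1 z.2 b0 g0.
have [-> -> ->] := lindex_0p (false, true, true) z.1 z.2 b0 g0.
have [-> -> ->] := lindex_0p (false, true, false) z.1 z.2 b0 g0.
rewrite /= ?mulr1n ?mulr0n ?mul0r ?mul1r ?addr0 ?add0r h23.
rewrite !onemlogistic !logisticE /x12b.
rewrite !(expRD, expRN).
by field; side.
Qed.

Definition SG (g : 'I_p -> R) m := \sum_(m <= l < p.+1) gam g l.

Lemma SG1 g : SG g 1 = gam g 1 + SG g 2.
Proof. by rewrite /SG big_ltn //; lia. Qed.

Lemma SG2 g : SG g 2 = gam g 2 + SG g 3.
Proof. by rewrite /SG big_ltn //; lia. Qed.

Lemma vv_1p j : vv (y0_1p p) j = (j < p)%N.
Proof. by case: (ltnP j p) => h; [rewrite (vv_in _ _ h) ffunE | rewrite vv_out // ltnNge h]. Qed.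

Lemma vv_01 j : vv (y0_01 p) j = (j < p)%N && (j != 0)%N.
Proof. by case: (ltnP j p) => h; [rewrite (vv_in _ _ h) ffunE /= ?h | rewrite vv_out // ltnNge h]. Qed.

Lemma vv_10 j : vv (y0_10 p) j = (j == 0)%N.
Proof.
case: (ltnP j p) => h; first by rewrite (vv_in _ _ h) ffunE.
have jn : (j != 0)%N by rewrite -lt0n; lia.
by rewrite vv_out // (negbTE jn).
Qed.

Lemma lindex_1p y (x : 'M[R]_(K,3)) (a : R) (b : 'I_K -> R) (g : 'I_p -> R) :
  [/\ lindex (y0_1p p) y x a b g 1 = xb x b 1 + SG g 1 + a,
      lindex (y0_1p p) y x a b g 2 = xb x b 2 + ((y.1.1)%:R * gam g 1 + SG g 2) + a &
      lindex (y0_1p p) y x a b g 3 = xb x b 3 + ((y.1.2)%:R * gam g 1 + (y.1.1)%:R * gam g 2 + SG g 3) + a].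
Proof.
rewrite /lindex sum_lag1 sum_lag2 sum_lag3 /SG; split; congr (_ + _ + _); try congr (_ + _);
  apply: (@eq_big_nat R 0 +%R) => l /andP[l1 lp]; rewrite vv_1p.
- have -> : (p - l < p)%N by lia.
  by rewrite mul1r.
- have -> : (p.+1 - l < p)%N by lia.
  by rewrite mul1r.
- have -> : (p.+2 - l < p)%N by lia.
  by rewrite mul1r.
Qed.

Lemma lindex_01 y (x : 'M[R]_(K,3)) (a : R) (b : 'I_K -> R) (g : 'I_p -> R) :
  [/\ lindex (y0_01 p) y x a b g 1 = xb x b 1 + (SG g 1 - gam g p) + a,
      lindex (y0_01 p) y x a b g 2 = xb x b 2 + ((y.1.1)%:R * gam g 1 + SG g 2) + a &
      lindex (y0_01 p) y x a b g 3 = xb x b 3 + ((y.1.2)%:R * gam g 1 + (y.1.1)%:R * gam g 2 + SG g 3) + a].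
Proof.
rewrite /lindex sum_lag1 sum_lag2 sum_lag3 /SG; split; congr (_ + _ + _); try congr (_ + _).
- rewrite big_nat_recr /=; last by lia.
  rewrite big_nat_recr /=; last by lia.
  rewrite vv_01 subnn andbF mul0r addr0 addrK.
  apply: (@eq_big_nat R 0 +%R) => l /andP[l1 lp]; rewrite vv_01.
  have -> : (p - l < p)%N && (p - l != 0)%N by apply/andP; split; lia.
  by rewrite mul1r.
- apply: (@eq_big_nat R 0 +%R) => l /andP[l1 lp]; rewrite vv_01.
  have -> : (p.+1 - l < p)%N && (p.+1 - l != 0)%N by apply/andP; split; lia.
  by rewrite mul1r.
- apply: (@eq_big_nat R 0 +%R) => l /andP[l1 lp]; rewrite vv_01.
  have -> : (p.+2 - l < p)%N && (p.+2 - l != 0)%N by apply/andP; split; lia.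
  by rewrite mul1r.
Qed.

Lemma lindex_10 y (x : 'M[R]_(K,3)) (a : R) (b : 'I_K -> R) (g : 'I_p -> R) :
  [/\ lindex (y0_10 p) y x a b g 1 = xb x b 1 + gam g p + a,
      lindex (y0_10 p) y x a b g 2 = xb x b 2 + (y.1.1)%:R * gam g 1 + a &
      lindex (y0_10 p) y x a b g 3 = xb x b 3 + ((y.1.2)%:R * gam g 1 + (y.1.1)%:R * gam g 2) + a].
Proof.
rewrite /lindex sum_lag1 sum_lag2 sum_lag3; split.
- congr (_ + _ + _).
  rewrite big_nat_recr /=; last by lia.
  rewrite vv_10 subnn /= mul1r big1_seq ?add0r // => l /andP[_].
  rewrite mem_index_iota => /andP[l1 lp]; rewrite vv_10.
  have -> : (p - l == 0)%N = false by apply/negbTE; rewrite -lt0n; lia.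
  by rewrite mul0r.
- rewrite big1_seq ?addr0 // => l /andP[_].
  rewrite mem_index_iota => /andP[l1 lp]; rewrite vv_10.
  have -> : (p.+1 - l == 0)%N = false by apply/negbTE; rewrite -lt0n; lia.
  by rewrite mul0r.
- rewrite big1_seq ?addr0 // => l /andP[_].
  rewrite mem_index_iota => /andP[l1 lp]; rewrite vv_10.
  have -> : (p.+2 - l == 0)%N = false by apply/negbTE; rewrite -lt0n; lia.
  by rewrite mul0r.
Qed.


Lemma ne_1_0 : (y0_1p p == y0_0p p) = false.
Proof. by apply/eqP => /ffunP /(_ (Ordinal (ltnW hp))); rewrite !ffunE. Qed.
Lemma ne_01_0 : (y0_01 p == y0_0p p) = false.
Proof. by apply/eqP => /ffunP /(_ (Ordinal hp)); rewrite !ffunE. Qed.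
Lemma ne_01_1 : (y0_01 p == y0_1p p) = false.
Proof. by apply/eqP => /ffunP /(_ (Ordinal (ltnW hp))); rewrite !ffunE. Qed.
Lemma ne_10_0 : (y0_10 p == y0_0p p) = false.
Proof. by apply/eqP => /ffunP /(_ (Ordinal (ltnW hp))); rewrite !ffunE. Qed.
Lemma ne_10_1 : (y0_10 p == y0_1p p) = false.
Proof. by apply/eqP => /ffunP /(_ (Ordinal hp)); rewrite !ffunE. Qed.
Lemma ne_10_01 : (y0_10 p == y0_01 p) = false.
Proof. by apply/eqP => /ffunP /(_ (Ordinal (ltnW hp))); rewrite !ffunE. Qed.

Lemma cmom_1p b0 g0 b g (z : XA R K) : xb z.1 b0 3 = xb z.1 b0 2 ->
  cmom b0 g0 (y0_1p p) b g z =
  expR (xb z.1 b0 2 + z.2 + SG g0 2) /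
   ((1 + expR (xb z.1 b0 1 + z.2 + SG g0 1)) * (1 + expR (xb z.1 b0 2 + z.2 + SG g0 2)) *
    (1 + expR (xb z.1 b0 2 + z.2 + SG g0 2 + gam g0 1))) *
  (expR (x21b z.1 b - x21b z.1 b0) * (expR (gam g0 1 - gam g 1) + expR (xb z.1 b0 2 + z.2 + SG g0 2 + gam g0 1))
   - (1 + expR (xb z.1 b0 2 + z.2 + SG g0 2 + gam g0 1))).
Proof.
move=> h23.
rewrite /cmom /mom ne_1_0 eqxx sum_bool3.
rewrite /m_1p !mulr0 !addr0 !add0r !prob3 /Yt /=.
have [-> -> ->] := lindex_1p (true, false, true) z.1 z.2 b0 g0.
have [-> -> ->] := lindex_1p (true, false, false) z.1 z.2 b0 g0.
have [-> -> ->] := lindex_1p (false, true, true) z.1 z.2 b0 g0.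
have [-> -> ->] := lindex_1p (false, true, false) z.1 z.2 b0 g0.
rewrite /= ?mulr1n ?mulr0n ?mul0r ?mul1r ?addr0 ?add0r h23.
rewrite !SG1 !SG2.
rewrite !onemlogistic !logisticE /x21b.
rewrite !(expRD, expRN).
by field; side.
Qed.

Lemma cmom_01 b0 g0 g (z : XA R K) : xb z.1 b0 3 = xb z.1 b0 2 -> gam g 1 = gam g0 1 ->
  cmom b0 g0 (y0_01 p) b0 g z =
  expR (xb z.1 b0 2 + z.2 + SG g0 2) /
   ((1 + expR (xb z.1 b0 1 + z.2 + (SG g0 1 - gam g0 p))) * (1 + expR (xb z.1 b0 2 + z.2 + SG g0 2))) *
  (expR (gam g p - gam g0 p) - 1).
Proof.
move=> h23 hg1.
rewrite /cmom /mom ne_01_0 ne_01_1 eqxx sum_bool3.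
rewrite /m_01 !mulr0 !addr0 !add0r !prob3 /Yt /=.
have [-> -> ->] := lindex_01 (true, false, true) z.1 z.2 b0 g0.
have [-> -> ->] := lindex_01 (true, false, false) z.1 z.2 b0 g0.
have [-> -> ->] := lindex_01 (false, true, true) z.1 z.2 b0 g0.
have [-> -> ->] := lindex_01 (false, true, false) z.1 z.2 b0 g0.
rewrite /= ?mulr1n ?mulr0n ?mul0r ?mul1r ?addr0 ?add0r h23 hg1.
rewrite !SG1 !SG2.
rewrite !onemlogistic !logisticE /x21b.
rewrite !(expRD, expRN).
by field; side.
Qed.

Lemma cmom_10 b0 g0 g (z : XA R K) : xb z.1 b0 3 = xb z.1 b0 2 -> gam g 1 = gam g0 1 ->
  cmom b0 g0 (y0_10 p) b0 g z =
  expR (xb z.1 b0 1 + z.2) /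
   ((1 + expR (xb z.1 b0 1 + z.2 + gam g0 p)) * (1 + expR (xb z.1 b0 2 + z.2 + gam g0 1))) *
  (expR (gam g p) - expR (gam g0 p)).
Proof.
move=> h23 hg1.
rewrite /cmom /mom ne_10_0 ne_10_1 ne_10_01 eqxx sum_bool3.
rewrite /m_10 !mulr0 !addr0 !add0r !prob3 /Yt /=.
have [-> -> ->] := lindex_10 (true, false, true) z.1 z.2 b0 g0.
have [-> -> ->] := lindex_10 (true, false, false) z.1 z.2 b0 g0.
have [-> -> ->] := lindex_10 (false, true, true) z.1 z.2 b0 g0.
have [-> -> ->] := lindex_10 (false, true, false) z.1 z.2 b0 g0.
rewrite /= ?mulr1n ?mulr0n ?mul0r ?mul1r ?addr0 ?add0r h23 hg1.
rewrite !onemlogistic !logisticE /x12b.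
rewrite !(expRD, expRN).
by field; side.
Qed.

End Comp.


Ltac pos := repeat first [ exact: expR_gt0 | exact: ltr01 | apply: addr_gt0 | apply: mulr_gt0 | apply: divr_gt0 ].

Section Fin.
Variables (R : realType) (p K : nat).
Hypothesis hp : (2 <= p)%N.

Lemma inord_t1 : (inord 0 : 'I_3) = t1. Proof. by apply: val_inj; rewrite /= inordK. Qed.
Lemma inord_t2 : (inord 1 : 'I_3) = t2. Proof. by apply: val_inj; rewrite /= inordK. Qed.
Lemma inord_t3 : (inord 2 : 'I_3) = t3. Proof. by apply: val_inj; rewrite /= inordK. Qed.

Lemma slice23 (z : XA R K) (b : 'I_K -> R) : Xslice z -> xb z.1 b 3 = xb z.1 b 2.
Proof.
move=> /matrixP H; rewrite /xb /= inord_t2 inord_t3; apply: eq_bigr => k _.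
by have := H k ord0; rewrite !mxE => ->.
Qed.

Lemma DS (x : 'M[R]_(K, 3)) (b b' : 'I_K -> R) :
  x12b x b - x12b x b' = \sum_k (x k t1 - x k t2) * (b k - b' k).
Proof.
rewrite /x12b /xb /= inord_t1 inord_t2 -!sumrB; apply: eq_bigr => k _; ring.
Qed.

Lemma D21 (x : 'M[R]_(K, 3)) (b b' : 'I_K -> R) :
  x21b x b - x21b x b' = x12b x b' - x12b x b.
Proof. rewrite /x21b /x12b; ring. Qed.

Lemma Dsign (b b' : 'I_K -> R) (z : XA R K) : Xs [ffun k => b' k < b k] z ->
  x12b z.1 b - x12b z.1 b' <= 0 /\
  ((exists k, b k != b' k) -> x12b z.1 b - x12b z.1 b' < 0).
Proof.
move=> hz; rewrite DS.
have term : forall k, (z.1 k t1 - z.1 k t2) * (b k - b' k) <= 0 /\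
   (b k != b' k -> (z.1 k t1 - z.1 k t2) * (b k - b' k) < 0).
  move=> k; have := hz k; rewrite ffunE.
  case: ltrP => hb h.
    by split => [|_]; nra.
  split; first by nra.
  by rewrite neq_lt => /orP[hb'|hb']; nra.
split; first by apply: sumr_le0 => k _; case: (term k).
move=> [k hk]; rewrite (bigD1 k) //= -[X in _ < X](addr0 0); apply: ltr_leD.
  by case: (term k) => _; apply.
by apply: sumr_le0 => i _; case: (term i).
Qed.

Lemma negA (e c E : R) : 0 < e -> 0 < c -> 0 < E -> e <= 1 -> c <= 1 -> (e < 1 \/ c < 1) ->
  e * (1 + E * c) - (1 + E) < 0.
Proof.
move=> h1 h2 h3 h4 h5 [h|h].
  have h6 : 0 < (1 - e) * (1 + E * c) by apply: mulr_gt0; nra.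
  have h7 : 0 <= E * (1 - c) by apply: mulr_ge0; lra.
  nra.
have h6 : 0 <= (1 - e) * (1 + E * c) by apply: mulr_ge0; nra.
have h7 : 0 < E * (1 - c) by apply: mulr_gt0; lra.
nra.
Qed.

Lemma posA (e c E : R) : 0 < e -> 0 < c -> 0 < E -> 1 <= e -> 1 < c ->
  0 < e * (1 + E * c) - (1 + E).
Proof.
move=> h1 h2 h3 h4 h5.
have h6 : 0 <= (e - 1) * (1 + E * c) by apply: mulr_ge0; nra.
have h7 : 0 < E * (c - 1) by apply: mulr_gt0; lra.
nra.
Qed.

Lemma negB (e c E : R) : 0 < e -> 0 < c -> 0 < E -> e <= 1 -> c <= 1 -> (e < 1 \/ c < 1) ->
  e * (c + E) - (1 + E) < 0.
Proof.
move=> h1 h2 h3 h4 h5 [h|h].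
  have h6 : 0 < (1 - e) * (c + E) by apply: mulr_gt0; nra.
  nra.
have h6 : 0 <= (1 - e) * (c + E) by apply: mulr_ge0; nra.
nra.
Qed.

Lemma posB (e c E : R) : 0 < e -> 0 < c -> 0 < E -> 1 <= e -> 1 < c ->
  0 < e * (c + E) - (1 + E).
Proof.
move=> h1 h2 h3 h4 h5.
have h6 : 0 <= (e - 1) * (c + E) by apply: mulr_ge0; nra.
nra.
Qed.

Lemma exp_le1 (u : R) : (expR u <= 1) = (u <= 0).
Proof. by rewrite -expR0 ler_expR. Qed.
Lemma exp_lt1 (u : R) : (expR u < 1) = (u < 0).
Proof. by rewrite -expR0 ltr_expR. Qed.
Lemma exp_ge1 (u : R) : (1 <= expR u) = (0 <= u).
Proof. by rewrite -expR0 ler_expR. Qed.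
Lemma exp_gt1 (u : R) : (1 < expR u) = (0 < u).
Proof. by rewrite -expR0 ltr_expR. Qed.


Lemma noneq_eq (b b' : 'I_K -> R) : ~ (exists k, b k != b' k) -> b = b'.
Proof.
move=> hn; apply: funext => k; apply/eqP; apply: contrapT => hk; apply: hn; exists k.
exact/negP.
Qed.

Lemma part_i_0p (b0 : 'I_K -> R) (g0 : 'I_p -> R) (nu : {ffun 'I_K -> bool} -> probability (XA R K) R)
  (hS : forall s, nu s (Xs s `&` @Xslice R K) = 1%E) b g
  (hint : forall s, (nu s).-integrable setT (fun z => (cmom b0 g0 (y0_0p p) b g z)%:E)) :
  (forall s, CE b0 g0 (y0_0p p) (nu s) b g = 0%E) <-> (b = b0 /\ gam g 1 = gam g0 1).
Proof.
have mS : forall s, measurable (Xs s `&` @Xslice R K) by move=> s; exact: meas_XsS.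
split; last first.
  move=> [hb hg] s; subst b; rewrite /CE; apply: (@int_zero R K _ _ _ (mS s) (hS s) (hint s)) => z [_ hz].
  rewrite (cmom_0p _ _ _ hp); last exact: (slice23 _ _ hz).
    by rewrite hg !subrr expR0 mulr1 mul1r subrr mulr0.
move=> H.
have Pz : forall z : XA R K, 0 < expR (xb z.1 b0 1 + z.2) / ((1 + expR (xb z.1 b0 1 + z.2)) *
   (1 + expR (xb z.1 b0 2 + z.2 + gam g0 1)) * (1 + expR (xb z.1 b0 2 + z.2))) by move=> z; pos.
case: (lerP (gam g0 1) (gam g 1)) => hc.
- case: (pselect (b = b0 /\ gam g 1 = gam g0 1)) => [hok|hn]; first exact: hok.
  exfalso.
  pose s : {ffun 'I_K -> bool} := [ffun k => b0 k < b k].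
  have : (CE b0 g0 (y0_0p p) (nu s) b g < 0)%E.
    rewrite /CE; apply: (@int_neg R K _ _ _ (mS s) (hS s) (hint s)) => z [hz hsl].
    rewrite (cmom_0p _ _ _ hp); last exact: (slice23 _ _ hsl).
    rewrite pmulr_rlt0 //.
    have [Dle Dlt] := Dsign _ _ _ hz.
    apply: negA; rewrite ?expR_gt0 ?exp_le1 //; try by rewrite subr_le0.
    case: (pselect (exists k, b k != b0 k)) => hex.
      by left; rewrite exp_lt1; exact: Dlt.
    right; rewrite exp_lt1 subr_lt0 lt_neqAle hc andbT.
    apply/eqP => e; apply: hn; split; [exact: noneq_eq | by rewrite e].
  by rewrite H ltxx.
- exfalso.
  pose s : {ffun 'I_K -> bool} := [ffun k => b k < b0 k].
  have : (0 < CE b0 g0 (y0_0p p) (nu s) b g)%E.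
    rewrite /CE; apply: (@int_pos R K _ _ _ (mS s) (hS s) (hint s)) => z [hz hsl].
    rewrite (cmom_0p _ _ _ hp); last exact: (slice23 _ _ hsl).
    rewrite pmulr_rgt0 //.
    have [Dle _] := Dsign _ _ _ hz.
    apply: posA; rewrite ?expR_gt0 ?exp_ge1 ?exp_gt1 ?subr_gt0 //.
    lra.
  by rewrite H ltxx.
Qed.

Lemma part_i_1p (b0 : 'I_K -> R) (g0 : 'I_p -> R) (nu : {ffun 'I_K -> bool} -> probability (XA R K) R)
  (hS : forall s, nu s (Xs s `&` @Xslice R K) = 1%E) b g
  (hint : forall s, (nu s).-integrable setT (fun z => (cmom b0 g0 (y0_1p p) b g z)%:E)) :
  (forall s, CE b0 g0 (y0_1p p) (nu s) b g = 0%E) <-> (b = b0 /\ gam g 1 = gam g0 1).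
Proof.
have mS : forall s, measurable (Xs s `&` @Xslice R K) by move=> s; exact: meas_XsS.
split; last first.
  move=> [hb hg] s; subst b; rewrite /CE; apply: (@int_zero R K _ _ _ (mS s) (hS s) (hint s)) => z [_ hz].
  rewrite (cmom_1p _ _ _ hp); last exact: (slice23 _ _ hz).
    by rewrite hg !subrr expR0 mul1r subrr mulr0.
move=> H.
have Pz : forall z : XA R K, 0 < expR (xb z.1 b0 2 + z.2 + @SG R p g0 2) /
   ((1 + expR (xb z.1 b0 1 + z.2 + @SG R p g0 1)) * (1 + expR (xb z.1 b0 2 + z.2 + @SG R p g0 2)) *
    (1 + expR (xb z.1 b0 2 + z.2 + @SG R p g0 2 + gam g0 1))) by move=> z; pos.
case: (lerP (gam g0 1) (gam g 1)) => hc.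
- case: (pselect (b = b0 /\ gam g 1 = gam g0 1)) => [hok|hn]; first exact: hok.
  exfalso.
  pose s : {ffun 'I_K -> bool} := [ffun k => b k < b0 k].
  have : (CE b0 g0 (y0_1p p) (nu s) b g < 0)%E.
    rewrite /CE; apply: (@int_neg R K _ _ _ (mS s) (hS s) (hint s)) => z [hz hsl].
    rewrite (cmom_1p _ _ _ hp); last exact: (slice23 _ _ hsl).
    rewrite pmulr_rlt0 // D21.
    have [Dle Dlt] := Dsign _ _ _ hz.
    apply: negB; rewrite ?expR_gt0 ?exp_le1 //; try by rewrite subr_le0.
    case: (pselect (exists k, b0 k != b k)) => hex.
      by left; rewrite exp_lt1; exact: Dlt.
    right; rewrite exp_lt1 subr_lt0 lt_neqAle hc andbT.
    apply/eqP => e; apply: hn; split; [exact/esym/noneq_eq | by rewrite e].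
  by rewrite H ltxx.
- exfalso.
  pose s : {ffun 'I_K -> bool} := [ffun k => b0 k < b k].
  have : (0 < CE b0 g0 (y0_1p p) (nu s) b g)%E.
    rewrite /CE; apply: (@int_pos R K _ _ _ (mS s) (hS s) (hint s)) => z [hz hsl].
    rewrite (cmom_1p _ _ _ hp); last exact: (slice23 _ _ hsl).
    rewrite pmulr_rgt0 // D21.
    have [Dle _] := Dsign _ _ _ hz.
    apply: posB; rewrite ?expR_gt0 ?exp_ge1 ?exp_gt1 ?subr_gt0 //.
    lra.
  by rewrite H ltxx.
Qed.

Lemma part_ii_01 (b0 : 'I_K -> R) (g0 : 'I_p -> R) (nu : probability (XA R K) R)
  (hS : nu (setT `&` @Xslice R K) = 1%E) g (hg1 : gam g 1 = gam g0 1)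
  (hint : nu.-integrable setT (fun z => (cmom b0 g0 (y0_01 p) b0 g z)%:E)) :
  CE b0 g0 (y0_01 p) nu b0 g = 0%E <-> gam g p = gam g0 p.
Proof.
have mS : measurable (setT `&` @Xslice R K) by apply: measurableI => //; exact: meas_slice.
have Pz : forall z : XA R K, 0 < expR (xb z.1 b0 2 + z.2 + @SG R p g0 2) /
   ((1 + expR (xb z.1 b0 1 + z.2 + (@SG R p g0 1 - gam g0 p))) * (1 + expR (xb z.1 b0 2 + z.2 + @SG R p g0 2)))
  by move=> z; pos.
split; last first.
  move=> hgp; rewrite /CE; apply: (@int_zero R K _ _ _ mS hS hint) => z [_ hz].
  rewrite (cmom_01 _ _ _ hp _ _ _ _ (slice23 _ _ hz) hg1).
    by rewrite hgp subrr expR0 subrr mulr0.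
move=> H; case: (ltgtP (gam g p) (gam g0 p)) => // hc; exfalso.
- have : (CE b0 g0 (y0_01 p) nu b0 g < 0)%E.
    rewrite /CE; apply: (@int_neg R K _ _ _ mS hS hint) => z [_ hz].
    rewrite (cmom_01 _ _ _ hp _ _ _ _ (slice23 _ _ hz) hg1).
    by rewrite pmulr_rlt0 // subr_lt0 exp_lt1 subr_lt0.
  by rewrite H ltxx.
- have : (0 < CE b0 g0 (y0_01 p) nu b0 g)%E.
    rewrite /CE; apply: (@int_pos R K _ _ _ mS hS hint) => z [_ hz].
    rewrite (cmom_01 _ _ _ hp _ _ _ _ (slice23 _ _ hz) hg1).
    by rewrite pmulr_rgt0 // subr_gt0 exp_gt1 subr_gt0.
  by rewrite H ltxx.
Qed.

Lemma part_ii_10 (b0 : 'I_K -> R) (g0 : 'I_p -> R) (nu : probability (XA R K) R)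
  (hS : nu (setT `&` @Xslice R K) = 1%E) g (hg1 : gam g 1 = gam g0 1)
  (hint : nu.-integrable setT (fun z => (cmom b0 g0 (y0_10 p) b0 g z)%:E)) :
  CE b0 g0 (y0_10 p) nu b0 g = 0%E <-> gam g p = gam g0 p.
Proof.
have mS : measurable (setT `&` @Xslice R K) by apply: measurableI => //; exact: meas_slice.
have Pz : forall z : XA R K, 0 < expR (xb z.1 b0 1 + z.2) /
   ((1 + expR (xb z.1 b0 1 + z.2 + gam g0 p)) * (1 + expR (xb z.1 b0 2 + z.2 + gam g0 1)))
  by move=> z; pos.
split; last first.
  move=> hgp; rewrite /CE; apply: (@int_zero R K _ _ _ mS hS hint) => z [_ hz].
  rewrite (cmom_10 _ _ _ hp _ _ _ _ (slice23 _ _ hz) hg1).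
    by rewrite hgp subrr mulr0.
move=> H; case: (ltgtP (gam g p) (gam g0 p)) => // hc; exfalso.
- have : (CE b0 g0 (y0_10 p) nu b0 g < 0)%E.
    rewrite /CE; apply: (@int_neg R K _ _ _ mS hS hint) => z [_ hz].
    rewrite (cmom_10 _ _ _ hp _ _ _ _ (slice23 _ _ hz) hg1).
    by rewrite pmulr_rlt0 // subr_lt0 ltr_expR.
  by rewrite H ltxx.
- have : (0 < CE b0 g0 (y0_10 p) nu b0 g)%E.
    rewrite /CE; apply: (@int_pos R K _ _ _ mS hS hint) => z [_ hz].
    rewrite (cmom_10 _ _ _ hp _ _ _ _ (slice23 _ _ hz) hg1).
    by rewrite pmulr_rgt0 // subr_gt0 ltr_expR.
  by rewrite H ltxx.
Qed.

End Fin.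

Theorem theorem2 (R : realType) (p K : nat) (hp : (2 <= p)%N)
  (b0 : 'I_K -> R) (g0 : 'I_p -> R)
  (mu : {ffun 'I_p -> bool} -> {measure set XA R K -> \bar R})
  (hmu : (\sum_(y0 : {ffun 'I_p -> bool}) mu y0 setT = 1)%E) :
  (* (i) *)
  (forall y0 : {ffun 'I_p -> bool}, y0 = y0_0p p \/ y0 = y0_1p p ->
    (forall (s : {ffun 'I_K -> bool}) (e : R), 0 < e ->
       (0 < mu y0 (Xs s `&` Xnear e))%E) ->
    forall nu : {ffun 'I_K -> bool} -> probability (XA R K) R,
    (forall s, cond_law_slice (mu y0) (Xs s) (nu s)) ->
    forall (b : 'I_K -> R) (g : 'I_p -> R),
    (forall s, (nu s).-integrable setT (fun z => (cmom b0 g0 y0 b g z)%:E)) ->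
    ((forall s, CE b0 g0 y0 (nu s) b g = 0%E) <-> (b = b0 /\ gam g 1 = gam g0 1)))
  /\
  (* (ii) *)
  (forall y0 : {ffun 'I_p -> bool}, y0 = y0_01 p \/ y0 = y0_10 p ->
    (forall e : R, 0 < e -> (0 < mu y0 (Xnear e))%E) ->
    forall nu : probability (XA R K) R,
    cond_law_slice (mu y0) setT nu ->
    forall g : 'I_p -> R, gam g 1 = gam g0 1 ->
    nu.-integrable setT (fun z => (cmom b0 g0 y0 b0 g z)%:E) ->
    (CE b0 g0 y0 nu b0 g = 0%E <-> gam g p = gam g0 p)).

Proof.
split.
- move=> y0 hy0 _ nu hnu b g hint.
  have hS : forall s, nu s (Xs s `&` @Xslice R K) = 1%E by move=> s; case: (hnu s).
  case: hy0 => hy; subst y0.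
    exact: (@part_i_0p R p K hp b0 g0 nu hS b g hint).
  exact: (@part_i_1p R p K hp b0 g0 nu hS b g hint).
- move=> y0 hy0 _ nu hnu g hg1 hint.
  have hS : nu (setT `&` @Xslice R K) = 1%E by case: hnu.
  case: hy0 => hy; subst y0.
    exact: (@part_ii_01 R p K hp b0 g0 nu hS g hg1 hint).
  exact: (@part_ii_10 R p K hp b0 g0 nu hS g hg1 hint).
Qed.
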